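(* Let $\sigma>0$, let $\mu_1,\ldots,\mu_n\in[0,1]$, and let $\mathcal{X}=\{x_1,\ldots,x_n\}\subseteq\mathbb{R}$ with $x_i=\mu_i+g_i$, where $g_1,\ldots,g_n$ are independent Gaussian random variables with mean $0$ and standard deviation $\sigma$. Then for every $\varepsilon>0$, the probability that $\mathcal{X}$ is not $\varepsilon$-spreaded is at most $\frac{2n^4\varepsilon^2}{\sigma^2}$.
   Context: $\mathcal{X}$ is $\varepsilon$-spreaded if (1) no interval of length $\varepsilon$ contains three or more points of $\mathcal{X}$, and (2) for any four points $x_1,x_2,x_3,x_4\in\mathcal{X}$, which are distinct except that $x_2$ and $x_3$ may be the same point, we have $|x_1-x_2|>\varepsilon$ or $|x_3-x_4|>\varepsilon$. *)

(* Defs.v *)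
From HB Require Import structures.
From mathcomp Require Import all_boot all_order all_algebra.
From mathcomp Require Import all_classical all_reals all_analysis.
Set Implicit Arguments. Unset Strict Implicit. Unset Printing Implicit Defensive.
Import Order.TTheory GRing.Theory Num.Theory.
Local Open Scope classical_set_scope.
Local Open Scope ring_scope.

Definition spreaded {R : realType} (eps : R) (X : set R) : Prop :=
  (forall a : R, ~ (exists x y z : R,
       [/\ X x, X y & X z] /\ [/\ x != y, x != z & y != z] /\
       [/\ a <= x <= a + eps, a <= y <= a + eps & a <= z <= a + eps]))
  /\
  (forall x1 x2 x3 x4 : R, X x1 -> X x2 -> X x3 -> X x4 ->
     x1 != x2 -> x1 != x3 -> x1 != x4 -> x2 != x4 -> x3 != x4 ->
     eps < `|x1 - x2| \/ eps < `|x3 - x4|).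

Definition mutually_independent {d : measure_display} {T : measurableType d}
  {R : realType} (P : probability T R) (n : nat) (g : 'I_n -> T -> R) : Prop :=
  forall (J : {set 'I_n}) (A : 'I_n -> set R),
    (forall i, measurable (A i)) ->
    P (\bigcap_(i in [set i | i \in J]) (g i @^-1` A i)) =
    (\prod_(i in J) P (g i @^-1` A i))%E.

(* Main.v *)
Require Import Defs.
From HB Require Import structures.
From mathcomp Require Import all_boot all_order all_algebra.
From mathcomp Require Import all_classical all_reals all_analysis.
From mathcomp Require Import measurable_realfun.
From mathcomp Require Import ring lra.
Import Order.TTheory GRing.Theory Num.Theory.
Local Open Scope classical_set_scope.
Local Open Scope ring_scope.

Definition cz (k : nat) : int := if odd k then Negz k./2 else Posz k./2.

Lemma cz_inj : injective cz.
Proof.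
move=> k k'; rewrite /cz; case ok: (odd k); case ok': (odd k') => h;
(have e : k./2 = k'./2 by congruence); try congruence;
by rewrite -[k]odd_double_half -[k']odd_double_half ok ok' e.
Qed.

Lemma cz_surj m : exists k, cz k = m.
Proof.
case: m => p; [exists p.*2 | exists p.*2.+1];
by rewrite /cz /= ?odd_double ?doubleK ?uphalf_double.
Qed.

Lemma sum_const_seq (V : nmodType) (I : Type) (s : seq I) (c : V) :
  (\sum_(i <- s) c = c *+ size s)%R.
Proof.
elim: s => [|a s IH]; first by rewrite big_nil.
by rewrite big_cons IH /= mulrS.
Qed.

Section helpers.
Context (R : realType) (d : measure_display) (T : measurableType d)
  (P : probability T R).

Lemma union_bound (I : Type) (s : seq I) (F : I -> set T) :
  (forall i, measurable (F i)) ->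
  (P (\big[setU/set0]_(i <- s) F i) <= \sum_(i <- s) P (F i))%E.
Proof.
move=> mF; elim: s => [|a s IH]; first by rewrite !big_nil measure0.
rewrite !big_cons; apply: le_trans (measureU2 _ _ _) _ => //.
- by apply: bigsetU_measurable => i _; exact: mF.
- by apply: leeD.
Qed.

Definition cell (dl : R) (k : nat) : set R :=
  `[(cz k)%:~R * dl, ((cz k)%:~R + 1) * dl[.

Lemma cell_meas dl k : measurable (cell dl k).
Proof. exact: measurable_itv. Qed.

Lemma cell_cover dl y : 0 < dl -> exists k, cell dl k y.
Proof.
move=> dl0; have [k hk] := cz_surj (Num.floor (y / dl)).
exists k; rewrite /cell /= in_itv /= hk.
have /andP[h1 h2] := floor_itv (y / dl).
rewrite intrD in h2.
by rewrite -ler_pdivlMr // -ltr_pdivrMr // h1 h2.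
Qed.

Lemma cell_uniq dl y k k' : 0 < dl -> cell dl k y -> cell dl k' y -> k = k'.
Proof.
move=> dl0; rewrite /cell /= !in_itv /= => /andP[a1 a2] /andP[b1 b2].
apply: cz_inj; apply/eqP; rewrite eq_le.
have h1 : (cz k)%:~R < (cz k')%:~R + 1 :> R.
  by rewrite -(ltr_pM2r dl0); apply: le_lt_trans b2.
have h2 : (cz k')%:~R < (cz k)%:~R + 1 :> R.
  by rewrite -(ltr_pM2r dl0); apply: le_lt_trans a2.
rewrite -(intrD _ _ 1) ltr_int in h1; rewrite -(intrD _ _ 1) ltr_int in h2.
by rewrite -ltzD1 h1 -ltzD1 h2.
Qed.

Lemma disc (dl : R) (G : T -> R) (E : set T) (F : nat -> set T) (C : R) :
  0 < dl -> measurable_fun setT G -> measurable E ->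
  (forall k, measurable (F k)) -> 0 <= C ->
  E `<=` \bigcup_k (G @^-1` cell dl k `&` F k) ->
  (forall k, P (G @^-1` cell dl k `&` F k) <= C%:E * P (G @^-1` cell dl k))%E ->
  (P E <= C%:E)%E.
Proof.
move=> dl0 mG mE mF C0 EF HF.
have mGc k : measurable (G @^-1` cell dl k).
  by rewrite -[X in measurable X]setTI; apply: mG => //; exact: cell_meas.
apply: le_trans (measure_sigma_subadditive P _ mE EF) _.
  by move=> k; apply: measurableI.
apply: (@le_trans _ _ (\sum_(0 <= k <oo) (C%:E * P (G @^-1` cell dl k)))%E).
  apply: lee_nneseries.
  - by move=> i _ _; apply: measure_ge0.
  - by move=> k _; apply: HF.
rewrite nneseriesZl //.
have triv : trivIset [set: nat] (fun k => G @^-1` cell dl k).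
  move=> i j _ _ [w [hi hj]]; exact: (cell_uniq _ _ _ _ dl0 hi hj).
rewrite -(measure_semi_bigcup P mGc triv (bigcupT_measurable _ mGc)).
rewrite -[leRHS]mule1; apply: lee_pmul => //.
apply: probability_le1; exact: bigcupT_measurable.
Qed.

Lemma bigU_mem (I : eqType) (s : seq I) (F : I -> set T) w :
  (\big[setU/set0]_(i <- s) F i) w <-> exists2 i, i \in s & F i w.
Proof.
elim: s => [|a s IH]; first by rewrite big_nil; split => // -[].
rewrite big_cons; split.
- case=> [h|/IH [i hi hF]]; first by exists a => //; rewrite mem_head.
  by exists i => //; rewrite in_cons hi orbT.
- move=> [i]; rewrite in_cons => /orP [/eqP -> h|hi hF]; first by left.
  by right; apply/IH; exists i.
Qed.

End helpers.
Arguments cell {R}.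
Arguments cell_meas {R}.
Arguments cell_cover {R}.
Arguments cell_uniq {R}.
Arguments disc {R d T}.
Arguments union_bound {R d T}.
Section main.
Context (R : realType) (d : measure_display) (T : measurableType d)
  (P : probability T R) (n : nat) (g : 'I_n -> T -> R)
  (hind : mutually_independent P g).

Lemma normal_itv_le (s a b : R) : s != 0 -> a <= b ->
  (normal_prob 0 s `[a, b] <= (normal_peak s * (b - a))%:E)%E.
Proof.
move=> s0 ab; rewrite /normal_prob.
apply: (@le_trans _ _ (\int[lebesgue_measure]_(x in `[a, b]) (cst (normal_peak s)%:E x))%E).
  apply: ge0_le_integral => //.
  - by move=> x _; rewrite lee_fin normal_pdf_ge0.
  - apply/measurable_EFinP; apply: measurable_funTS; exact: measurable_normal_pdf.
  - by move=> x _; rewrite lee_fin normal_pdf_ub.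
rewrite integral_cst //= lebesgue_measure_itv /=.
case: ifP => hab; first by rewrite -EFinD -EFinM.
by rewrite mule0 lee_fin mulr_ge0 ?normal_peak_ge0 ?subr_ge0.
Qed.

Lemma indep3 i j k A B C : i != j -> i != k -> j != k ->
  measurable A -> measurable B -> measurable C ->
  P (g i @^-1` A `&` g j @^-1` B `&` g k @^-1` C) =
  (P (g i @^-1` A) * (P (g j @^-1` B) * P (g k @^-1` C)))%E.
Proof.
move=> ij ik jk mA mB mC.
pose F (l : 'I_n) := if l == i then A else if l == j then B else C.
have mF l : measurable (F l) by rewrite /F; case: (l == i); case: (l == j).
have := hind (i |: (j |: [set k])) F mF.
rewrite big_setU1 /=; last by rewrite !inE negb_or ij ik.
rewrite big_setU1 /=; last by rewrite !inE.
rewrite big_set1 /F !eqxx [j == i]eq_sym (negbTE ij) [k == i]eq_sym (negbTE ik) [k == j]eq_sym (negbTE jk).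
move=> <-; congr (P _); apply/seteqP; split => w.
- move=> [[hi hj] hk] l; rewrite /= !inE /F => /or3P[]/eqP->.
  + by rewrite eqxx.
  + by rewrite eq_sym (negbTE ij) eqxx.
  + by rewrite eq_sym (negbTE ik) eq_sym (negbTE jk).
- move=> H; split; [split|].
  + by have := H i; rewrite /= !inE /F !eqxx /=; apply.
  + by have := H j; rewrite /= !inE /F !eqxx orbT eq_sym (negbTE ij); apply.
  + have := H k; rewrite /= !inE /F !eqxx !orbT eq_sym (negbTE ik).
    by rewrite eq_sym (negbTE jk); apply.
Qed.

Lemma indep4 i j k l A B C D : i != j -> i != k -> i != l -> j != k ->
  j != l -> k != l ->
  measurable A -> measurable B -> measurable C -> measurable D ->
  P (g i @^-1` A `&` g j @^-1` B `&` g k @^-1` C `&` g l @^-1` D) =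
  (P (g i @^-1` A) * (P (g j @^-1` B) * (P (g k @^-1` C) * P (g l @^-1` D))))%E.
Proof.
move=> ij ik il jk jl kl mA mB mC mD.
pose F (m : 'I_n) :=
  if m == i then A else if m == j then B else if m == k then C else D.
have mF m : measurable (F m).
  by rewrite /F; case: (m == i); case: (m == j); case: (m == k).
have := hind (i |: (j |: (k |: [set l]))) F mF.
rewrite big_setU1 /=; last by rewrite !inE !negb_or ij ik il.
rewrite big_setU1 /=; last by rewrite !inE !negb_or jk jl.
rewrite big_setU1 /=; last by rewrite !inE.
rewrite big_set1 /F !eqxx [j == i]eq_sym (negbTE ij) [k == i]eq_sym (negbTE ik).
rewrite [l == i]eq_sym (negbTE il) [k == j]eq_sym (negbTE jk).
rewrite [l == j]eq_sym (negbTE jl) [l == k]eq_sym (negbTE kl).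
move=> <-; congr (P _); apply/seteqP; split => w.
- move=> [[[hi hj] hk] hl] m; rewrite /= !inE /F => /or4P[]/eqP->.
  + by rewrite eqxx.
  + by rewrite eq_sym (negbTE ij) eqxx.
  + by rewrite eq_sym (negbTE ik) eq_sym (negbTE jk) eqxx.
  + by rewrite eq_sym (negbTE il) eq_sym (negbTE jl) eq_sym (negbTE kl).
- move=> H; split; [split; [split|]|].
  + by have := H i; rewrite /= !inE /F !eqxx /=; apply.
  + by have := H j; rewrite /= !inE /F !eqxx orbT eq_sym (negbTE ij); apply.
  + have := H k; rewrite /= !inE /F !eqxx !orbT eq_sym (negbTE ik).
    by rewrite eq_sym (negbTE jk); apply.
  + have := H l; rewrite /= !inE /F !eqxx !orbT eq_sym (negbTE il).
    by rewrite eq_sym (negbTE jl) eq_sym (negbTE kl); apply.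
Qed.

End main.
Arguments normal_itv_le {R}.
Arguments indep3 {R d T P n g}.
Arguments indep4 {R d T P n g}.


Section core.
Context (R : realType) (d : measure_display) (T : measurableType d)
  (P : probability T R) (n : nat) (sigma : R) (mu : 'I_n -> R)
  (g : 'I_n -> T -> R)
  (s0 : 0 < sigma)
  (hg : forall i, measurable_fun setT (g i))
  (hlaw : forall i (A : set R), measurable A ->
     P (g i @^-1` A) = normal_prob 0 sigma A)
  (hind : mutually_independent P g)
  (eps : R) (e0 : 0 < eps).

Let x i w := mu i + g i w.
Let dl := eps / 2.
Let L := normal_peak sigma * (dl + eps *+ 2).
Let dl0 : 0 < dl. Proof. by rewrite divr_gt0. Qed.

Let J (u v : 'I_n) k : set R :=
  `[(cz k)%:~R * dl + mu v - mu u - eps, ((cz k)%:~R + 1) * dl + mu v - mu u + eps].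

Let mpre u A : measurable A -> measurable (g u @^-1` A).
Proof. by move=> mA; rewrite -[X in measurable X]setTI; apply: hg. Qed.

Let L0 : 0 <= L.
Proof. by rewrite mulr_ge0 ?normal_peak_ge0 // addr_ge0 ?(ltW dl0) ?mulrn_wge0 ?(ltW e0). Qed.

Let pair_J u v k w : `|x u w - x v w| <= eps -> cell dl k (g v w) ->
  J u v k (g u w).
Proof.
rewrite /x /cell /J /= !in_itv /= ler_norml mulrDl mul1r.
set c := (cz k)%:~R * dl => /andP[h1 h2] /andP[h3 h4].
apply/andP; split; lra.
Qed.

Let PJ u v k : (P (g u @^-1` J u v k) <= L%:E)%E.
Proof.
rewrite hlaw; last exact: measurable_itv.
rewrite /J mulrDl mul1r; set c := (cz k)%:~R * dl; clearbody c.
have hab : c + mu v - mu u - eps <= c + dl + mu v - mu u + eps.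
  have := e0; have := dl0; lra.
apply: (le_trans (normal_itv_le sigma _ _ (negbT (gt_eqF s0)) hab)).
rewrite /L lee_fin; apply: ler_pM => //; first exact: normal_peak_ge0.
- have := e0; have := dl0; lra.
- rewrite mulr2n; lra.
Qed.


Let close u v := [set w | `|x u w - x v w| <= eps].

Let mdf u v : measurable_fun setT (fun w => x u w - x v w).
Proof.
apply: measurable_funB; apply: measurable_funD => //; exact: hg.
Qed.

Let mclose u v : measurable (close u v).
Proof.
have -> : close u v = (fun w => x u w - x v w) @^-1` `[- eps, eps].
  by apply/seteqP; split => w /=; rewrite in_itv /= /close /= ler_norml.
rewrite -[X in measurable X]setTI; apply: mdf => //; exact: measurable_itv.
Qed.

Let mJ u v k : measurable (g u @^-1` J u v k).
Proof. apply: mpre; exact: measurable_itv. Qed.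

Let mcell u k : measurable (g u @^-1` cell dl k).
Proof. apply: mpre; exact: cell_meas. Qed.

Let bound3 a b e : a != b -> a != e -> b != e ->
  (P (close a b `&` close e b) <= (L * L)%:E)%E.
Proof.
move=> ab ae be.
apply: (disc P dl (g b) _ (fun k => g a @^-1` J a b k `&` g e @^-1` J e b k)
  (L * L) dl0 (hg b)).
- by apply: measurableI.
- by move=> k; apply: measurableI.
- by apply: mulr_ge0.
- move=> w [h1 h2]; have [k hk] := cell_cover dl (g b w) dl0.
  by exists k => //; split => //; split; apply: pair_J.
- move=> k; rewrite setIA (indep3 hind) //;
    try by [rewrite eq_sym | exact: cell_meas | exact: measurable_itv].
  rewrite muleC EFinM; apply: lee_pmul.
  + by apply: mule_ge0; apply: measure_ge0.
  + exact: measure_ge0.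
  + by apply: lee_pmul; try apply: measure_ge0; apply: PJ.
  + done.
Qed.

Let bound4 a b c e : a != b -> a != c -> a != e -> b != c -> b != e -> c != e ->
  (P (close a b `&` close e c) <= (L * L)%:E)%E.
Proof.
move=> ab ac ae bc be ce.
apply: (disc P dl (g b) _ (fun k => g a @^-1` J a b k `&` close e c)
  (L * L) dl0 (hg b)).
- by apply: measurableI.
- by move=> k; apply: measurableI.
- by apply: mulr_ge0.
- move=> w [h1 h2]; have [k hk] := cell_cover dl (g b w) dl0.
  by exists k => //; split => //; split => //; apply: pair_J.
move=> k.
pose pb := fine (P (g b @^-1` cell dl k)).
have pbE : pb%:E = P (g b @^-1` cell dl k).
  by rewrite fineK //; apply: fin_num_measure; exact: mcell.
have pb0 : 0 <= pb by apply: fine_ge0; apply: measure_ge0.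
apply: (le_trans (disc P dl (g c) _ (fun k' => g b @^-1` cell dl k `&`
   g a @^-1` J a b k `&` g e @^-1` J e c k') (pb * (L * L)) dl0 (hg c) _ _ _ _ _)).
- by apply: measurableI => //; apply: measurableI.
- by move=> k'; apply: measurableI => //; apply: measurableI.
- by apply: mulr_ge0 => //; apply: mulr_ge0.
- move=> w [hb [ha hec]]; have [k' hk] := cell_cover dl (g c w) dl0.
  by exists k' => //; split => //; split; [split|] => //; apply: pair_J.
- move=> k'; rewrite !setIA (indep4 hind) //;
    try by [rewrite eq_sym | exact: cell_meas | exact: measurable_itv].
  rewrite muleC !EFinM pbE; apply: lee_pmul.
  + by apply: mule_ge0; [apply: measure_ge0|apply: mule_ge0; apply: measure_ge0].
  + exact: measure_ge0.
  + apply: lee_pmul => //; try apply: measure_ge0.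
    * by apply: mule_ge0; apply: measure_ge0.
    * by apply: lee_pmul; try apply: measure_ge0; apply: PJ.
  + done.
by rewrite EFinM pbE muleC.
Qed.

Let ne u v := [set w | x u w != x v w].

Let mne u v : measurable (ne u v).
Proof.
have -> : ne u v = (fun w => x u w - x v w) @^-1` (~` [set 0]).
  apply/seteqP; split => w /=.
  - by move=> h /eqP; rewrite subr_eq0 => /eqP e; rewrite /ne /= e eqxx in h.
  - by move=> h; apply/eqP => e; apply: h; rewrite e subrr.
rewrite -[X in measurable X]setTI; apply: mdf => //.
by apply: measurableC; exact: measurable_set1.
Qed.

Let B a b c e := ne a b `&` ne a c `&` ne a e `&` ne b e `&` ne c e `&`
  close a b `&` close c e.

Let mB a b c e : measurable (B a b c e).
Proof. by repeat apply: measurableI. Qed.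

Let mono A C : measurable A -> measurable C -> A `<=` C -> (P A <= P C)%E.
Proof. by move=> mA mC h; apply: le_measure => //; rewrite inE. Qed.

Let PB a b c e : (P (B a b c e) <= (L * L)%:E)%E.
Proof.
have z u : ne u u = set0 by apply/seteqP; split => w //=; rewrite /ne /= eqxx.
have P0 a' b' c' e' : B a' b' c' e' `<=` set0 ->
    (P (B a' b' c' e') <= (L * L)%:E)%E.
  by rewrite subset0 => ->; rewrite measure0 lee_fin mulr_ge0.
case: (eqVneq a b) => [<-|ab].
  by apply: P0; rewrite /B z => w; do 6 case; move=> ?.
case: (eqVneq a c) => [<-|ac].
  by apply: P0; rewrite /B z => w; do 6 case; move=> ?.
case: (eqVneq a e) => [<-|ae].
  by apply: P0; rewrite /B z => w; do 6 case; move=> ?.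
case: (eqVneq b e) => [<-|be].
  by apply: P0; rewrite /B z => w; do 6 case; move=> ?.
case: (eqVneq c e) => [<-|ce].
  by apply: P0; rewrite /B z => w; do 6 case; move=> ?.
case: (eqVneq b c) => [<-|bc].
  apply: le_trans (bound3 a b e ab ae be).
  apply: mono => //; first by apply: measurableI.
  by move=> w [] [] _ h1 h2; split => //; rewrite /close /= distrC.
apply: le_trans (bound4 a b c e ab ac ae bc be ce).
apply: mono => //; first by apply: measurableI.
by move=> w [] [] _ h1 h2; split => //; rewrite /close /= distrC.
Qed.

Local Notation T4 := ('I_n * 'I_n * 'I_n * 'I_n)%type.
Let Bt (t : T4) := B t.1.1.1 t.1.1.2 t.1.2 t.2.

Let bad_eq : [set w | ~ spreaded eps [set mu i + g i w | i in [set: 'I_n]]] =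
  \big[setU/set0]_(t <- enum {: T4}) Bt t.
Proof.
apply/seteqP; split => w /=.
- move=> nsp; apply/bigU_mem; apply: contrapT => nU; apply: nsp; split.
  + move=> a [y1 [y2 [y3 [[[i _ <-] [j _ <-] [k _ <-]]
      [[d12 d13 d23] [/andP[l1 u1] /andP[l2 u2] /andP[l3 u3]]]]]]].
    apply: nU; exists (i, j, j, k); first by rewrite mem_enum.
    rewrite /Bt /B /=; do ! split => //;
      rewrite /close /x /= ler_norml; apply/andP; split; lra.
  + move=> y1 y2 y3 y4 [i _ <-] [j _ <-] [k _ <-] [l _ <-] d12 d13 d14 d24 d34.
    have [h1|h1] := ltP eps `|(mu i + g i w) - (mu j + g j w)|; first by left.
    have [h2|h2] := ltP eps `|(mu k + g k w) - (mu l + g l w)|; first by right.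
    exfalso; apply: nU; exists (i, j, k, l); first by rewrite mem_enum.
    by rewrite /Bt /B /=; do ! split.
- move=> /bigU_mem [[[[a b] c] e] _]; rewrite /Bt /B /=.
  move=> [[[[[[hab hac] hae] hbe] hce] cab] cce] [_ H2].
  have := H2 (x a w) (x b w) (x c w) (x e w).
  have mem u : [set mu i + g i w | i in [set: 'I_n]] (x u w) by exists u.
  move=> /(_ (mem a) (mem b) (mem c) (mem e) hab hac hae hbe hce) [h|h].
  + by move: cab; rewrite /close /= leNgt h.
  + by move: cce; rewrite /close /= leNgt h.
Qed.

Let LL : L * L <= 2 * eps ^+ 2 / sigma ^+ 2.
Proof.
rewrite /L /normal_peak /dl.
have q0 : 0 < sigma ^+ 2 by apply: exprn_gt0.
have p2 := @pi_ge2 R.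
have hq : 0 <= sigma ^+ 2 * pi *+ 2.
  by apply: mulrn_wge0; apply: mulr_ge0; [exact: ltW | exact: pi_ge0].
set r := Num.sqrt (sigma ^+ 2 * pi *+ 2).
have r2 : r ^+ 2 = sigma ^+ 2 * pi *+ 2 by rewrite sqr_sqrtr.
have rpos : 0 < r.
  rewrite sqrtr_gt0; apply: mulrn_wgt0 => //; apply: mulr_gt0 => //.
  exact: pi_gt0.
have -> : r^-1 * (eps / 2 + eps *+ 2) * (r^-1 * (eps / 2 + eps *+ 2)) =
    (eps / 2 + eps *+ 2) ^+ 2 / r ^+ 2.
  by field; rewrite gt_eqF.
rewrite r2 ler_pdivrMr; last by rewrite -r2 exprn_gt0.
have -> : 2 * eps ^+ 2 / sigma ^+ 2 * (sigma ^+ 2 * pi *+ 2) = 4 * pi * eps ^+ 2.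
  by field; rewrite gt_eqF.
have -> : (eps / 2 + eps *+ 2) ^+ 2 = 25 / 4 * eps ^+ 2.
  by rewrite mulr2n; field.
have h1 : 0 <= pi - 2 :> R by rewrite subr_ge0.
have := mulr_ge0 h1 (sqr_ge0 eps).
have := sqr_ge0 eps.
move: (eps ^+ 2) => e2; nra.
Qed.

Lemma core_bound :
  (P [set w | ~ spreaded eps [set (mu i + g i w)%R | i in [set: 'I_n]]] <=
   ((2 * n%:R ^+ 4 * eps ^+ 2) / sigma ^+ 2)%:E)%E.
Proof.
rewrite bad_eq; apply: (le_trans (union_bound P _ (enum {: T4}) Bt
  (fun t => mB t.1.1.1 t.1.1.2 t.1.2 t.2))).
have hs : (\sum_(t <- enum {: T4}) P (Bt t) <=
    \sum_(t <- enum {: T4}) (L * L)%:E)%E.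
  by apply: lee_sum => t _; apply: PB.
apply: (le_trans hs).
rewrite sumEFin lee_fin sum_const_seq -cardE !card_prod !card_ord.
rewrite -[L * L *+ _]mulr_natr.
apply: (@le_trans _ _ (2 * eps ^+ 2 / sigma ^+ 2 * (n * n * n * n)%:R)).
  by apply: ler_pM => //; apply: mulr_ge0.
rewrite le_eqVlt; apply/orP; left; apply/eqP; rewrite !natrM; ring.
Qed.

End core.

Theorem lemma20 (R : realType) (d : measure_display) (T : measurableType d)
  (P : probability T R) (n : nat) (sigma : R) (mu : 'I_n -> R)
  (g : 'I_n -> T -> R) :
  0 < sigma ->
  (forall i, 0 <= mu i <= 1) ->
  (forall i, measurable_fun setT (g i)) ->
  (forall i (A : set R), measurable A ->
     P (g i @^-1` A) = normal_prob 0 sigma A) ->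
  mutually_independent P g ->
  forall eps : R, 0 < eps ->
  (P [set w : T | ~ spreaded eps [set (mu i + g i w)%R | i in [set: 'I_n]]]
     <= ((2 * (n%:R) ^+ 4 * eps ^+ 2) / sigma ^+ 2)%:E)%E.
Proof.
move=> s0 _ hg hlaw hind eps e0.
exact: (core_bound R d T P n sigma mu g s0 hg hlaw hind eps e0).
Qed.
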